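(* Let $L>0$, $\mu>0$ and $0<\mu_{x}\le L$ be given, with $\kappa:=L/\mu\ge 2$. Then there exists a (quadratic) function $f:\mathbb{R}\times\mathbb{R}\to\mathbb{R}$ having a differential Stackelberg equilibrium $z^\ast$ with parameters $(L,\mu,\mu_{x})$ such that, whenever the stepsize ratio satisfies $r=\eta_y/\eta_x\le\kappa$, GDA with exact gradients does not converge locally to $z^\ast$, for every choice of stepsize $\eta_x>0$: that is, for every $\delta>0$ there is an initial point $z^0$ with $\|z^0-z^\ast\|_2\le\delta$ from which the GDA iterates do not converge to $z^\ast$.
   Context: Let $f:\mathbb{R}^n\times\mathbb{R}^m\to\mathbb{R}$ be twice continuously differentiable, and write $z=(x,y)$. For a point $z^\ast=(x^\ast,y^\ast)$ write the Hessian as $\nabla^2 f(z^\ast)=\begin{pmatrix} C & B\\ B^\top & -A\end{pmatrix}$ with $C=\nabla^2_{xx}f(z^\ast)$, $B=\nabla^2_{xy}f(z^\ast)$, $-A=\nabla^2_{yy}f(z^\ast)$. The point $z^\ast$ is a differential Stackelberg equilibrium if $\nabla_x f(z^\ast)=0$, $\nabla_y f(z^\ast)=0$, $A\succ 0$ and $C+BA^{-1}B^\top\succ 0$. It is said to have parameters $(L,\mu,\mu_x)$ if $\max\{\|A\|_2,\|B\|_2,\|C\|_2\}\le L$, $\mu=\lambda_{\min}(A)$ and $\mu_x=\min\{L,\lambda_{\min}(C+BA^{-1}B^\top)\}$; set $\kappa=L/\mu$, $\kappa_x=L/\mu_x$. GDA with stepsizes $\eta_x,\eta_y>0$ and exact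 gradients is the iteration $x^{k+1}=x^k-\eta_x\nabla_x f(x^k;y^k)$, $y^{k+1}=y^k+\eta_y\nabla_y f(x^k;y^k)$; the stepsize ratio is $r=\eta_y/\eta_x$. *)

(* Defs.v *)
From Stdlib Require Import Reals Lra.
From Coquelicot Require Import Coquelicot.
Open Scope R_scope.

(* Here n = m = 1: f : R -> R -> R, f x y = f(x,y). *)

Definition dx (f : R -> R -> R) (x y : R) : R := Derive (fun t => f t y) x.
Definition dy (f : R -> R -> R) (x y : R) : R := Derive (fun t => f x t) y.

Definition dxx (f : R -> R -> R) (x y : R) : R := Derive (fun t => dx f t y) x.
Definition dxy (f : R -> R -> R) (x y : R) : R := Derive (fun t => dx f x t) y.
Definition dyx (f : R -> R -> R) (x y : R) : R := Derive (fun t => dy f t y) x.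
Definition dyy (f : R -> R -> R) (x y : R) : R := Derive (fun t => dy f x t) y.

Definition cont2 (g : R -> R -> R) (x y : R) : Prop :=
  continuous (fun p : R * R => g (fst p) (snd p)) (x, y).

Definition C2 (f : R -> R -> R) : Prop :=
  forall x y,
    ex_derive (fun t => f t y) x /\ ex_derive (fun t => f x t) y /\
    ex_derive (fun t => dx f t y) x /\ ex_derive (fun t => dx f x t) y /\
    ex_derive (fun t => dy f t y) x /\ ex_derive (fun t => dy f x t) y /\
    cont2 f x y /\ cont2 (dx f) x y /\ cont2 (dy f) x y /\
    cont2 (dxx f) x y /\ cont2 (dxy f) x y /\
    cont2 (dyx f) x y /\ cont2 (dyy f) x y.

Definition hC (f : R -> R -> R) xs ys := dxx f xs ys.
Definition hB (f : R -> R -> R) xs ys := dxy f xs ys.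
Definition hA (f : R -> R -> R) xs ys := - dyy f xs ys.

(* differential Stackelberg equilibrium (1x1 blocks: A^{-1} = /A,
   A > 0 means A is positive definite) *)
Definition DSE (f : R -> R -> R) (xs ys : R) : Prop :=
  dx f xs ys = 0 /\ dy f xs ys = 0 /\ 0 < hA f xs ys /\
  0 < hC f xs ys + hB f xs ys * / hA f xs ys * hB f xs ys.

(* DSE with parameters (L, mu, mux); for 1x1 matrices the spectral norm is
   the absolute value and lambda_min is the entry itself. *)
Definition DSE_params (f : R -> R -> R) (xs ys L mu mux : R) : Prop :=
  DSE f xs ys /\
  Rmax (Rabs (hA f xs ys)) (Rmax (Rabs (hB f xs ys)) (Rabs (hC f xs ys))) <= L /\
  mu = hA f xs ys /\
  mux = Rmin L (hC f xs ys + hB f xs ys * / hA f xs ys * hB f xs ys).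

Fixpoint gda (f : R -> R -> R) (ex ey : R) (z0 : R * R) (k : nat) : R * R :=
  match k with
  | O => z0
  | S k' =>
      let z := gda f ex ey z0 k' in
      (fst z - ex * dx f (fst z) (snd z), snd z + ey * dy f (fst z) (snd z))
  end.

(* Main.v *)
Require Import Defs.
From Stdlib Require Import Reals Lra Psatz FunctionalExtensionality.
From Coquelicot Require Import Coquelicot.
Open Scope R_scope.

Lemma cont_quad (p q r s t u : R) (z : R*R) :
  continuous (fun w : R*R => p*(fst w*fst w) + q*(fst w*snd w) + r*(snd w*snd w) + s*fst w + t*snd w + u) z.
Proof.
destruct z as [x y].
assert (F : continuous (fun w : R*R => fst w) (x,y)) by apply continuous_fst.
assert (S : continuous (fun w : R*R => snd w) (x,y)) by apply continuous_snd.
assert (K : forall k:R, continuous (fun w : R*R => k) (x,y)) by (intros; apply continuous_const).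
assert (M : forall f g : R*R -> R, continuous f (x,y) -> continuous g (x,y) -> continuous (fun w => f w * g w) (x,y)).
{ intros f g Hf Hg. exact (continuous_mult f g (x,y) Hf Hg). }
assert (P : forall f g : R*R -> R, continuous f (x,y) -> continuous g (x,y) -> continuous (fun w => f w + g w) (x,y)).
{ intros f g Hf Hg. exact (continuous_plus f g (x,y) Hf Hg). }
repeat apply P; repeat apply M; auto.
Qed.
Section S.
Variables a b c : R.
Definition fq (x y : R) : R := c/2*(x*x) + b*(x*y) - a/2*(y*y).

Lemma dx_fq x y : dx fq x y = c*x + b*y.
Proof. unfold dx, fq. apply is_derive_unique. auto_derive; try exact I; field. Qed.
Lemma dy_fq x y : dy fq x y = b*x - a*y.
Proof. unfold dy, fq. apply is_derive_unique. auto_derive; try exact I; field. Qed.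
Lemma dx_fq' : dx fq = fun x y => c*x + b*y.
Proof. apply functional_extensionality; intro; apply functional_extensionality; intro; apply dx_fq. Qed.
Lemma dy_fq' : dy fq = fun x y => b*x - a*y.
Proof. apply functional_extensionality; intro; apply functional_extensionality; intro; apply dy_fq. Qed.
Lemma dxx_fq x y : dxx fq x y = c.
Proof. unfold dxx; rewrite dx_fq'. apply is_derive_unique. auto_derive; try exact I; field. Qed.
Lemma dxy_fq x y : dxy fq x y = b.
Proof. unfold dxy; rewrite dx_fq'. apply is_derive_unique. auto_derive; try exact I; field. Qed.
Lemma dyx_fq x y : dyx fq x y = b.
Proof. unfold dyx; rewrite dy_fq'. apply is_derive_unique. auto_derive; try exact I; field. Qed.
Lemma dyy_fq x y : dyy fq x y = -a.
Proof. unfold dyy; rewrite dy_fq'. apply is_derive_unique. auto_derive; try exact I; field. Qed.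

Lemma cont2_ext (g : R -> R -> R) p q r s t u x y :
  (forall x y, g x y = p*(x*x) + q*(x*y) + r*(y*y) + s*x + t*y + u) -> cont2 g x y.
Proof.
intro H. unfold cont2.
eapply continuous_ext; [| apply (cont_quad p q r s t u)].
intro w; simpl. rewrite H; reflexivity.
Qed.

Lemma C2_fq : C2 fq.
Proof.
intros x y.
split; [unfold fq; auto_derive; trivial|]. split; [unfold fq; auto_derive; trivial|].
do 4 (split; [rewrite ?dx_fq', ?dy_fq'; auto_derive; trivial|]).
split; [|split; [|split; [|split; [|split; [|split]]]]].
- apply (cont2_ext _ (c/2) b (-a/2) 0 0 0); intros; unfold fq; field.
- apply (cont2_ext _ 0 0 0 c b 0); intros; try rewrite dx_fq; field.
- apply (cont2_ext _ 0 0 0 b (-a) 0); intros; try rewrite dy_fq; field.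
- apply (cont2_ext _ 0 0 0 0 0 c); intros; rewrite dxx_fq; field.
- apply (cont2_ext _ 0 0 0 0 0 b); intros; rewrite dxy_fq; field.
- apply (cont2_ext _ 0 0 0 0 0 b); intros; rewrite dyx_fq; field.
- apply (cont2_ext _ 0 0 0 0 0 (-a)); intros; rewrite dyy_fq; field.
Qed.

Definition qf (ex ey : R) (z : R*R) : R :=
  ey*b*(fst z*fst z) + ex*b*(snd z*snd z) + (ex*c - ey*a)*(fst z*snd z).

Lemma qf_step ex ey z0 k :
  qf ex ey (gda fq ex ey z0 (S k)) =
  ((1 - ex*c)*(1-ey*a) + ex*ey*(b*b)) * qf ex ey (gda fq ex ey z0 k).
Proof.
simpl. rewrite dx_fq, dy_fq. unfold qf; simpl. ring.
Qed.
End S.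

Theorem theorem1 :
  forall L mu mux : R,
    0 < L -> 0 < mu -> 0 < mux -> mux <= L -> 2 <= L / mu ->
    exists (f : R -> R -> R) (xs ys : R),
      C2 f /\ DSE_params f xs ys L mu mux /\
      forall ex ey : R, 0 < ex -> 0 < ey -> ey / ex <= L / mu ->
        forall delta : R, 0 < delta ->
          exists x0 y0 : R,
            sqrt ((x0 - xs) ^ 2 + (y0 - ys) ^ 2) <= delta /\
            ~ filterlim (gda f ex ey (x0, y0)) eventually (locally (xs, ys)).
Proof.
intros L mu mux HL Hmu Hmux HmuxL Hk.
set (b := sqrt (mu*(L+mux))).
assert (Hbb : b*b = mu*(L+mux)) by (apply sqrt_sqrt; nra).
assert (Hb : 0 < b) by (apply sqrt_lt_R0; nra).
assert (H2mu : 2*mu <= L).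
{ replace L with ((L/mu)*mu) by (field; lra). nra. }
exists (fq mu b (-L)), 0, 0.
split; [apply C2_fq|]. split.
- unfold DSE_params, DSE, hA, hB, hC.
  rewrite dx_fq, dy_fq, dxx_fq, dxy_fq, dyy_fq.
  assert (E : - L + b * / - - mu * b = mux) by (rewrite Ropp_involutive; replace (b * / mu * b) with ((b*b)/mu) by (field; lra); rewrite Hbb; field; lra).
  rewrite E.
  split; [repeat split; try ring; lra|].
  split; [|split; [ring| symmetry; apply Rmin_right; lra]].
  assert (b <= L) by nra.
  rewrite (Rabs_pos_eq b) by lra. rewrite Ropp_involutive, Rabs_Ropp, (Rabs_pos_eq mu), (Rabs_pos_eq L) by lra.
  apply Rmax_lub; [lra|]. apply Rmax_lub; lra.
- intros ex ey Hex Hey Hr delta Hd.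
  assert (Hr' : ey*mu <= ex*L).
  { replace (ey*mu) with ((ey/ex)*(ex*mu)) by (field; lra).
    replace (ex*L) with ((L/mu)*(ex*mu)) by (field; lra).
    apply Rmult_le_compat_r; nra. }
  exists delta, 0. split.
  + replace ((delta - 0) ^ 2 + (0 - 0) ^ 2) with (delta*delta) by ring.
    rewrite sqrt_square; lra.
  + intro Hlim.
    set (q0 := qf mu b (-L) ex ey (delta, 0)).
    assert (Hq0 : 0 < q0) by (unfold q0, qf; simpl; assert (0 < ey*b) by nra; assert (0 < delta*delta) by nra; nra).
    assert (HD : 1 <= (1 - ex * (-L)) * (1 - ey * mu) + ex * ey * (b * b)).
    { rewrite Hbb. assert (0 <= ex*ey*(mu*mux)) by (repeat apply Rmult_le_pos; lra). nra. }
    assert (Hind : forall k, q0 <= qf mu b (-L) ex ey (gda (fq mu b (-L)) ex ey (delta,0) k)).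
    { induction k as [|k IH]; [apply Rle_refl|]. rewrite qf_step.
      set (Q := qf mu b (-L) ex ey (gda (fq mu b (-L)) ex ey (delta,0) k)) in *.
      set (D := (1 - ex * (-L)) * (1 - ey * mu) + ex * ey * (b * b)) in *. nra. }
    assert (Hc : continuous (qf mu b (-L) ex ey) (0,0)).
    { eapply continuous_ext; [| apply (cont_quad (ey*b) (ex*(-L) - ey*mu) (ex*b) 0 0 0)].
      intro w; unfold qf; simpl; field. }
    pose proof (filterlim_comp _ _ _ _ _ _ _ _ Hlim Hc) as Hl.
    pose proof (proj1 (filterlim_locally _ _) Hl) as Hl2. clear Hl. rename Hl2 into Hl.
    destruct (Hl (mkposreal q0 Hq0)) as [N HN].
    specialize (HN N (Nat.le_refl N)). specialize (Hind N).
    revert HN. unfold ball; simpl. unfold AbsRing_ball, abs, minus, plus, opp; simpl.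
    replace (qf mu b (- L) ex ey (0, 0)) with 0 by (unfold qf; simpl; field).
    intro HN. pose proof (Rle_abs (qf mu b (- L) ex ey (gda (fq mu b (- L)) ex ey (delta, 0) N) + - 0)).
    lra.
Qed.
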